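(* Let $l$ be a prime and $(\mathcal{G}_n)_{n\in\mathbb{N}}$ a sequence of finite $l$-groups with $\mathcal{G}_n\le S_{l^n}$ and $\mathcal{G}_n\le\mathcal{G}_{n+1}$ for all $n$ (inside $S_\infty$, where $S_{l^n}$ is the subgroup fixing every integer $>l^n$). Let $\alpha\in\mathcal{G}_k$ be an element of order $l$ for some $k$, and $\mathcal{H}=\langle\alpha\rangle$. Let $d_n$ be the maximal order of a metacyclic subgroup of $\mathcal{G}_n$. Assume (1) $\lim_{n\to\infty}|\mathcal{G}_n|/d_n=\infty$, and (2) $\alpha$ has infinitely many conjugates in $\bigcup_{n}\mathcal{G}_n$. Then there is $N$ such that for every $n\ge N$ and every metacyclic subgroup $D\le\mathcal{G}_n$ one has $S(D,\mathcal{H})>1$, double cosets being taken in $\mathcal{G}_n$.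
   Context: $S_\infty$ is the group of permutations of $\mathbb{N}$ fixing all but finitely many elements. A group is metacyclic if it has a cyclic normal subgroup with cyclic quotient. For subgroups $A,B$ of a finite group $\mathcal{G}$, a double coset $AxB$ ($x\in\mathcal{G}$) is split if $|AxB|=|A||B|$ (equivalently $x^{-1}Ax\cap B=1$), and $S(A,B)$ denotes the number of distinct split double cosets. *)

(* Defs.v *)
From mathcomp Require Import all_boot all_fingroup all_solvable.
Set Implicit Arguments. Unset Strict Implicit. Unset Printing Implicit Defensive.
Local Open Scope group_scope.

(* S_m viewed inside S_infinity: a permutation of 'I_m acts on nat,
   fixing every integer >= m (0-based indexing of {1,...,m}). *)
Definition sinf (m : nat) (s : {perm 'I_m}) : nat -> nat :=
  fun x => if @insub nat (fun y => y < m) 'I_m x is Some i then val (s i) else x.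

Definition split_dcosets (gT : finGroupType) (G A B : {set gT}) : {set {set gT}} :=
  [set A :* x * B | x in G & #|A :* x * B| == (#|A| * #|B|)%N].
Definition S_split (gT : finGroupType) (G A B : {set gT}) : nat :=
  #|split_dcosets G A B|.

Definition max_metacyclic (gT : finGroupType) (G : {set gT}) : nat :=
  \max_(D : {group gT} | (D \subset G) && metacyclic D) #|D|.

Definition is_conj_in_union (l k : nat) (G : forall n, {group {perm 'I_(l ^ n)}})
  (alpha : {perm 'I_(l ^ k)}) (f : nat -> nat) : Prop :=
  exists n (a g : {perm 'I_(l ^ n)}),
    [/\ a \in G n, g \in G n, sinf a =1 sinf alpha & f =1 sinf (a ^ g)].

Definition infinitely_many_conj (l k : nat) (G : forall n, {group {perm 'I_(l ^ n)}})
  (alpha : {perm 'I_(l ^ k)}) : Prop :=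
  forall m : nat, exists fs : seq (nat -> nat),
    [/\ size fs = m,
        forall i, i < m -> is_conj_in_union G alpha (nth id fs i) &
        forall i j, i < m -> j < m -> i <> j ->
          ~ (nth id fs i =1 nth id fs j)].

(* Main.v *)
Require Import Defs.
From mathcomp Require Import all_boot all_fingroup all_solvable.
Set Implicit Arguments. Unset Strict Implicit. Unset Printing Implicit Defensive.
From Stdlib Require Import ClassicalEpsilon.
Local Open Scope group_scope.

Lemma sinf_val m (s : {perm 'I_m}) (i : 'I_m) : sinf s i = s i.
Proof. by rewrite /sinf valK. Qed.

Lemma sinf_ge m (s : {perm 'I_m}) x : (m <= x)%N -> sinf s x = x.
Proof. by move=> h; rewrite /sinf insubF // ltnNge h. Qed.

Lemma sinfM m (s t : {perm 'I_m}) x : sinf (s * t) x = sinf t (sinf s x).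
Proof.
case: (ltnP x m) => h; last by rewrite !sinf_ge.
have -> : x = nat_of_ord (Ordinal h) by [].
by rewrite !sinf_val permM.
Qed.

Lemma sinf1 m x : sinf (1 : {perm 'I_m}) x = x.
Proof.
case: (ltnP x m) => h; last by rewrite !sinf_ge.
have -> : x = nat_of_ord (Ordinal h) by [].
by rewrite sinf_val perm1.
Qed.

Lemma sinf_inj m (s t : {perm 'I_m}) : sinf s =1 sinf t -> s = t.
Proof. by move=> e; apply/permP => i; apply: val_inj; rewrite /= -!sinf_val e. Qed.

Section Cross.
Variables m1 m2 : nat.

Lemma sinfV_eq (s1 : {perm 'I_m1}) (s2 : {perm 'I_m2}) : sinf s1 =1 sinf s2 -> sinf s1^-1 =1 sinf s2^-1.
Proof.
move=> e q; set r := sinf s2^-1 q.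
have hr : sinf s2 r = q by rewrite /r -sinfM mulVg sinf1.
by rewrite -{1}hr -e -sinfM mulgV sinf1.
Qed.

Lemma sinfM_eq (s1 t1 : {perm 'I_m1}) (s2 t2 : {perm 'I_m2}) : sinf s1 =1 sinf s2 -> sinf t1 =1 sinf t2 ->
  sinf (s1 * t1) =1 sinf (s2 * t2).
Proof. by move=> e1 e2 q; rewrite !sinfM e1 e2. Qed.

Lemma sinfJ_eq (s1 t1 : {perm 'I_m1}) (s2 t2 : {perm 'I_m2}) : sinf s1 =1 sinf s2 -> sinf t1 =1 sinf t2 ->
  sinf (s1 ^ t1) =1 sinf (s2 ^ t2).
Proof.
by move=> e1 e2; rewrite !conjgE; exact: (sinfM_eq (sinfV_eq e2) (sinfM_eq e1 e2)).
Qed.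

Lemma sinfX_eq (s1 : {perm 'I_m1}) (s2 : {perm 'I_m2}) i : sinf s1 =1 sinf s2 -> sinf (s1 ^+ i) =1 sinf (s2 ^+ i).
Proof.
move=> e; elim: i => [|i IH]; first by move=> q; rewrite !expg0 !sinf1.
by rewrite !expgS; exact: (sinfM_eq e IH).
Qed.

Lemma sinf_order (s1 : {perm 'I_m1}) (s2 : {perm 'I_m2}) : sinf s1 =1 sinf s2 -> #[s1] = #[s2].
Proof.
move=> e.
have key i : (s1 ^+ i == 1) = (s2 ^+ i == 1).
  apply/eqP/eqP => h; apply: sinf_inj => q; rewrite sinf1.
    by rewrite -(sinfX_eq i e) h sinf1.
  by rewrite (sinfX_eq i e) h sinf1.
apply/eqP; rewrite eqn_dvd; apply/andP; split.
  by rewrite order_dvdn key expg_order.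
by rewrite order_dvdn -key expg_order.
Qed.
End Cross.


Section Family.
Variables (l : nat) (G : forall n : nat, {group {perm 'I_(l ^ n)}}).
Hypothesis hnest : forall n (s : {perm 'I_(l ^ n)}), s \in G n ->
     exists2 t : {perm 'I_(l ^ n.+1)}, t \in G n.+1 & sinf t =1 sinf s.

Lemma lift_G n0 n : (n0 <= n)%N -> forall s : {perm 'I_(l ^ n0)}, s \in G n0 ->
  exists2 t : {perm 'I_(l ^ n)}, t \in G n & sinf t =1 sinf s.
Proof.
elim: n => [|n IH] le s sG.
  have e : n0 = 0%N by apply/eqP; rewrite -leqn0.
  by subst; exists s.
rewrite leq_eqVlt in le; case/orP: le => [/eqP e|lt].
  by subst; exists s.
have [t tG et] := IH lt s sG.
have [t' t'G et'] := hnest tG.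
by exists t' => // q; rewrite et' et.
Qed.

Lemma conj_family k (alpha : {perm 'I_(l ^ k)}) : (0 < l)%N ->
  infinitely_many_conj G alpha -> forall m, exists m0, forall n, (m0 <= n)%N ->
  forall a : {perm 'I_(l ^ n)}, sinf a =1 sinf alpha ->
  exists Y : {set {perm 'I_(l ^ n)}}, [/\ #|Y| = m, Y \subset a ^: G n &
     forall y, y \in Y -> forall i : 'I_(l ^ n), (l ^ m0 <= i)%N -> y i = i].
Proof.
move=> lpos hinf m.
have [fs [hsz hc hd]] := hinf m.
have hn : forall i : 'I_m, {n1 | exists (a1 g1 : {perm 'I_(l ^ n1)}),
    [/\ a1 \in G n1, g1 \in G n1, sinf a1 =1 sinf alpha & nth id fs i =1 sinf (a1 ^ g1)]}.
  by move=> i; apply: constructive_indefinite_description; exact: hc.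
exists (\max_(i < m) sval (hn i)) => n le a ea.
have hb : forall i : 'I_m, {b : {perm 'I_(l ^ n)} |
    [/\ b \in a ^: G n, sinf b =1 nth id fs i &
        forall j : 'I_(l ^ n), (l ^ (\max_(i < m) sval (hn i)) <= j)%N -> b j = j]}.
  move=> i; apply: constructive_indefinite_description.
  have := @leq_bigmax _ (fun i => sval (hn i)) i.
  case: (hn i) => n1 [a1 [g1 [a1G g1G ea1 ef]]] /= n1le.
  have [t tG et] := lift_G (leq_trans n1le le) g1G.
  have eb : sinf (a ^ t) =1 sinf (a1 ^ g1).
    by apply: sinfJ_eq => // q; rewrite ea ea1.
  exists (a ^ t); split; first exact: memJ_class.
    by move=> q; rewrite eb ef.
  move=> j hj; apply: val_inj => /=.
  rewrite -sinf_val eb sinf_ge //.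
  by apply: leq_trans hj; rewrite leq_pexp2l.
pose f i := sval (hb i).
have fP i : [/\ f i \in a ^: G n, sinf (f i) =1 nth id fs i &
        forall j : 'I_(l ^ n), (l ^ (\max_(i < m) sval (hn i)) <= j)%N -> f i j = j].
  exact: (svalP (hb i)).
exists (f @: 'I_m); split.
- rewrite card_imset ?card_ord //.
  move=> i j e; case: (eqVneq i j) => // ne; exfalso.
  have [_ hi _] := fP i; have [_ hj _] := fP j.
  apply: (hd i j (ltn_ord i) (ltn_ord j)).
    by move=> h; move: ne; rewrite -val_eqE /= h eqxx.
  by move=> q; rewrite -hi -hj e.
- by apply/subsetP => y /imsetP [i _ ->]; have [] := fP i.
- by move=> y /imsetP [i _ ->]; have [_ _] := fP i.
Qed.
End Family.

Lemma split_card (gT : finGroupType) (D : {group gT}) (a x : gT) :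
  prime #[a] -> a \notin D :^ x -> #|D :* x * <[a]>| = (#|D| * #[a])%N.
Proof.
move=> pa aD.
have -> : D :* x * <[a]> = x *: (D :^ x * <[a]>) by rewrite conjsgE mulgA lcosetKV.
rewrite card_lcoset.
have := mul_cardG (D :^ x)%G <[a]>%G.
rewrite setIC prime_TIg ?cycle_subG -?orderE // cards1 muln1 cardJg => <-.
by rewrite orderE.
Qed.

Lemma T_bound (gT : finGroupType) (Gn D : {group gT}) (a : gT) :
  prime #[a] -> (S_split Gn D <[a]> <= 1)%N ->
  (#|[set x in Gn | a \notin D :^ x]| <= #|D| * #[a])%N.
Proof.
move=> pa hS; set T := [set x in Gn | _].
have [-> | [x0 x0T]] := set_0Vmem T; first by rewrite cards0.
have inS x : x \in T -> D :* x * <[a]> \in split_dcosets Gn D <[a]>.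
  rewrite inE => /andP [xG ax]; apply/imsetP; exists x => //.
  by rewrite inE xG split_card // -orderE eqxx.
have sub : T \subset D :* x0 * <[a]>.
  apply/subsetP => x xT.
  have <- : D :* x * <[a]> = D :* x0 * <[a]>.
    by move/card_le1_eqP: hS => hS; apply: hS; apply: inS.
  by rewrite -{1}[x]mulg1; apply: mem_mulg; [exact: rcoset_refl | exact: group1].
by rewrite -(split_card (a := a) (x := x0)) ?subset_leq_card //; move: x0T; rewrite inE => /andP [].
Qed.

Lemma card_bigcup_seq (gT : finType) (I : eqType) (s : seq I) (F : I -> {set gT}) :
  (#|\bigcup_(i <- s) F i| <= \sum_(i <- s) #|F i|)%N.
Proof.
elim: s => [|i s IH]; first by rewrite !big_nil cards0.
rewrite !big_cons; apply: leq_trans (leq_add (leqnn _) IH).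
by rewrite cardsU leq_subr.
Qed.

Lemma find_conj (gT : finGroupType) (Gn D : {group gT}) (a : gT) (W : {set gT}) :
  prime #[a] -> (S_split Gn D <[a]> <= 1)%N -> W \subset a ^: Gn ->
  (#|W| * (#|D| * #[a]) < #|Gn|)%N ->
  exists2 x0, x0 \in Gn & W \subset D :^ x0.
Proof.
move=> pa hS sW hc.
pose bad b := [set x in Gn | b \notin D :^ x].
have hT := T_bound pa hS.
have hbad b : b \in W -> (#|bad b| <= #|D| * #[a])%N.
  move=> bW; have /imsetP [t tG ->] := subsetP sW b bW.
  apply: leq_trans hT; rewrite -(card_rcoset [set x in Gn | a \notin D :^ x] t); apply: subset_leq_card.
  apply/subsetP => x; rewrite inE => /andP [xG hx].
  rewrite mem_rcoset inE groupM ?groupV //=.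
  apply: contra hx => ha.
  by rewrite -(mulgVK t x) conjsgM memJ_conjg.
pose U := \bigcup_(b in W) bad b.
have hU : (#|U| < #|Gn|)%N.
  rewrite /U -big_enum; apply: leq_ltn_trans (card_bigcup_seq _ _) _.
  apply: leq_ltn_trans hc.
  rewrite cardE -sum1_size big_distrl /= big_seq [X in (_ <= X)%N]big_seq.
  by apply: leq_sum => b; rewrite mem_enum mul1n; apply: hbad.
have : ~~ (Gn \subset U).
  by apply/negP => sub; move: (subset_leq_card sub); rewrite leqNgt hU.
case/subsetPn => x0 x0G x0U; exists x0 => //.
apply/subsetP => b bW; apply: contraR x0U => hb.
by apply: (subsetP (bigcup_sup b bW)); rewrite inE x0G.
Qed.

Lemma fixX (T : finType) (v : {perm T}) p i : v p = p -> (v ^+ i) p = p.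
Proof. by move=> h; elim: i => [|i IH]; rewrite ?expg0 ?perm1 // expgS permM h. Qed.

Lemma cyc_support (T : finType) (l : nat) (C : {group {perm T}}) (w : {perm T}) :
  prime l -> cyclic C -> l.-group C -> w \in C -> w != 1 ->
  (#|C| <= #|[set q | w q != q]|)%N.
Proof.
move=> pl cC lC wC w1.
have ntC : C :!=: 1.
  by apply: contra w1 => /eqP C1; move: wC; rewrite C1 inE.
have [_ ldC _] := pgroup_pdiv lC ntC.
have [u uC ou] := Cauchy pl ldC.
have key x : x \in C -> x != 1 -> u \in <[x]>.
  move=> xC x1.
  have lx : l.-group <[x]> by apply: pgroupS lC; rewrite cycle_subG.
  have ntx : <[x]> :!=: 1 by rewrite cycle_eq1.
  have [_ ldx _] := pgroup_pdiv lx ntx.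
  have [s sx os] := Cauchy pl ldx.
  have sC : s \in C by apply: (subsetP _ s sx); rewrite cycle_subG.
  have : <[s]> :==: <[u]>.
    by rewrite (eq_subG_cyclic cC) ?cycle_subG // -!orderE os ou.
  move/eqP => e; have : u \in <[s]> by rewrite e cycle_id.
  by apply: (subsetP _ u); rewrite cycle_subG.
have u1 : u != 1 by rewrite -order_eq1 ou; apply: contraTneq pl => ->.
have [p0 hp0] : exists p0, u p0 != p0.
  apply/existsP; apply: contraR u1 => /existsPn h.
  by apply/eqP/permP => q; rewrite perm1; apply/eqP; move: (h q); rewrite negbK.
have cCC := cyclic_abelian cC.
have suw : [set q | u q != q] \subset [set q | w q != q].
  apply/subsetP => q; rewrite !inE; apply: contra => /eqP hq.
  by have /cycleP [i ->] := key w wC w1; rewrite fixX.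
apply: leq_trans (subset_leq_card suw).
have inj : {in C &, injective (fun z : {perm T} => z p0)}.
  move=> z1 z2 z1C z2C /= e.
  apply/eqP; rewrite eq_mulgV1; apply/negPn/negP => v1.
  have vC : z1 * z2^-1 \in C by rewrite groupM ?groupV.
  have /cycleP [i ui] := key _ vC v1.
  move: hp0; rewrite ui fixX ?eqxx //.
  by rewrite permM e -permM mulgV perm1.
rewrite -(card_in_imset inj); apply: subset_leq_card.
apply/subsetP => q /imsetP [z zC ->]; rewrite inE.
apply: contra hp0 => /eqP h.
have czu : commute z u by apply: (centsP cCC).
move: h; rewrite -permM czu permM => /perm_inj ->.
by [].
Qed.

Lemma metacyclicJ (gT : finGroupType) (D : {group gT}) x :
  metacyclic D -> metacyclic (D :^ x).
Proof.
case/metacyclicP => K [cK nK qK]; apply/metacyclicP; exists (K :^ x)%G; split.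
- by rewrite cyclicJ.
- by rewrite normalJ.
have := morphim_cyclic (quotm_morphism (conjgm_morphism D x) nK) qK.
rewrite morphim_quotm /= !morphim_conj setIid (setIidPr (normal_sub nK)).
by [].
Qed.

Lemma meta_bound (gT : finGroupType) (l : nat) (D : {group gT}) (W Y : {set gT}) :
  prime l -> l.-group D -> metacyclic D -> W \subset D ->
  (forall b, b \in W -> b ^+ l = 1) -> Y \subset W -> (l < #|Y|)%N ->
  exists K : {group gT}, [/\ cyclic K, l.-group K, (#|W| <= #|K| * l)%N &
    exists y1, exists y2, [/\ y1 \in Y, y2 \in Y, y1 != y2 & y1 * y2^-1 \in K]].
Proof.
move=> pl lD /metacyclicP [K [cK nK qK]] sWD hW sYW hY.
exists K; have lK : l.-group K by apply: pgroupS (normal_sub nK) lD.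
have lQ : l.-group (D / K) := quotient_pgroup K lD.
have hU : (#|'Ohm_1(D / K)| <= l)%N.
  have [Q1|ntQ] := eqVneq (D / K) 1.
    apply: leq_trans (subset_leq_card (Ohm_sub 1 (D / K)%G)) _.
    by change (#|D / K| <= l)%N; rewrite Q1 cards1 prime_gt0.
  by rewrite (Ohm1_cyclic_pgroup_prime qK lQ ntQ).
have nKD := normal_norm nK.
have memU b : b \in W -> coset K b \in 'Ohm_1(D / K).
  move=> bW; have bD := subsetP sWD b bW; have bN := subsetP nKD b bD.
  rewrite (OhmE 1 lQ); apply: mem_gen; rewrite !inE mem_quotient //= expn1.
  by rewrite -morphX // hW // morph1 eqxx.
have sWL : W \subset coset K @*^-1 'Ohm_1(D / K).
  apply/subsetP => b bW; apply: mem_morphpre; last exact: memU.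
  by apply: (subsetP nKD); apply: (subsetP sWD).
split => //.
  apply: leq_trans (subset_leq_card sWL) _.
  rewrite card_morphpre ?ker_coset ?leq_mul2l ?hU ?orbT //.
  apply: subset_trans (Ohm_sub 1 _) _; exact: morphimS.
have : ~~ dinjectiveb (coset K) Y.
  apply/negP => /dinjectiveP inj.
  have := card_in_imset inj.
  have : coset K @: Y \subset 'Ohm_1(D / K).
    by apply/subsetP => q /imsetP [y yY ->]; apply: memU; apply: (subsetP sYW).
  move/subset_leq_card => h1 h2.
  by move: hY; rewrite -h2 ltnNge (leq_trans h1 hU).
case/dinjectivePn => y1 y1Y [y2 /andP [ne y2Y] e].
exists y1, y2; split => //; first by rewrite eq_sym.
have yN y : y \in Y -> y \in 'N(K).
  by move=> yY; apply: (subsetP nKD); apply: (subsetP sWD); apply: (subsetP sYW).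
by rewrite -mem_rcoset; apply/rcoset_kercosetP; rewrite ?yN.
Qed.


Lemma small_card (N M : nat) : (#|[set q : 'I_N | (q < M)%N]| <= M)%N.
Proof.
case: M => [|M].
  by rewrite (_ : [set q : 'I_N | (q < 0)%N] = set0) ?cards0 //; apply/setP => q; rewrite !inE.
have inj : {in [set q : 'I_N | (q < M.+1)%N] &, injective (fun q : 'I_N => (inord q : 'I_M.+1))}.
  move=> q1 q2; rewrite !inE => h1 h2 e; apply: val_inj.
  by rewrite /= -(inordK h1) -(inordK h2) e.
rewrite -(card_in_imset inj); apply: leq_trans (max_card _) _; by rewrite card_ord.
Qed.

Theorem mainTheorem13 (l : nat) (G : forall n : nat, {group {perm 'I_(l ^ n)}})
  (k : nat) (alpha : {perm 'I_(l ^ k)}) :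
  prime l ->
  (forall n, l.-group (G n)) ->
  (forall n (s : {perm 'I_(l ^ n)}), s \in G n ->
     exists2 t : {perm 'I_(l ^ n.+1)}, t \in G n.+1 & sinf t =1 sinf s) ->
  alpha \in G k -> #[alpha] = l ->
  (forall M : nat, exists N : nat, forall n, (N <= n)%N ->
     (M * max_metacyclic (G n) < #|G n|)%N) ->
  infinitely_many_conj G alpha ->
  exists N : nat, forall n, (N <= n)%N ->
    forall (a : {perm 'I_(l ^ n)}), a \in G n -> sinf a =1 sinf alpha ->
    forall D : {group {perm 'I_(l ^ n)}}, D \subset G n -> metacyclic D ->
      (1 < S_split (G n) D <[a]>)%N.
Proof.
move=> pl lG hnest aG oa hmeta hinf.
have lpos : (0 < l)%N := prime_gt0 pl.
have [m0 hY] := conj_family hnest lpos hinf l.+1.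
have [m1 hZ] := conj_family hnest lpos hinf (l ^ m0.+1).+1.
pose K := (l.+1 + (l ^ m0.+1).+1)%N.
have [N1 hN1] := hmeta (K * l)%N.
exists (maxn N1 (maxn m0 m1)) => n; rewrite !geq_max => /and3P [h1 h0 hm1] a aGn ea D sD mD.
rewrite ltnNge; apply/negP => hS.
have oa' : #[a] = l by rewrite (sinf_order ea) oa.
have pa : prime #[a] by rewrite oa'.
have [Y [cY sY smY]] := hY n h0 a ea.
have [Z [cZ sZ _]] := hZ n hm1 a ea.
pose W := Y :|: Z.
have sW : W \subset a ^: G n by rewrite subUset sY sZ.
have cW : (#|W| <= K)%N by rewrite /K -cY -cZ cardsU leq_subr.
have hDm : (#|D| <= max_metacyclic (G n))%N.
  rewrite /max_metacyclic.
  apply: (@leq_bigmax_cond _ (fun H : {group _} => (H \subset G n) && metacyclic H) (fun H => #|H|) D).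
  by rewrite sD mD.
have hc : (#|W| * (#|D| * #[a]) < #|G n|)%N.
  apply: leq_ltn_trans (hN1 n h1).
  apply: leq_trans (leq_mul cW (leq_mul hDm (leqnn #[a]))) _.
  by rewrite oa' [(max_metacyclic _ * l)%N]mulnC mulnA.
have [x0 x0G sWx] := find_conj pa hS sW hc.
have lD' : l.-group (D :^ x0)%G.
  by apply: pgroupS (lG n); rewrite /= -(conjGid x0G) conjSg.
have mD' : metacyclic (D :^ x0)%G := metacyclicJ x0 mD.
have hWl b : b \in W -> b ^+ l = 1.
  move=> bW; have /imsetP [t tG ->] := subsetP sW b bW.
  have al : a ^+ l = 1 by apply/eqP; rewrite -order_dvdn oa'.
  by rewrite -conjXg al conj1g.
have sYW : Y \subset W := subsetUl Y Z.
have hYl : (l < #|Y|)%N by rewrite cY.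
have [Kc [cK lK hWK [y1 [y2 [y1Y y2Y ne yK]]]]] :=
  meta_bound pl lD' mD' sWx hWl sYW hYl.
have w1 : y1 * y2^-1 != 1 by rewrite -eq_mulgV1.
have hKs := cyc_support pl cK lK yK w1.
have hsupp : #|[set q | (y1 * y2^-1)%g q != q]| <= l ^ m0.
  apply: leq_trans (small_card (l ^ n) (l ^ m0)).
  apply: subset_leq_card; apply/subsetP => q; rewrite !inE; apply: contraR.
  rewrite -leqNgt => hq.
  have e1 := smY y1 y1Y q hq; have e2 := smY y2 y2Y q hq.
  by rewrite permM e1 -{1}e2 permK.
have : (#|Z| <= l ^ m0.+1)%N.
  apply: leq_trans (subset_leq_card (subsetUr Y Z)) _.
  apply: leq_trans hWK _; rewrite expnSr leq_mul2r.
  by rewrite (leq_trans hKs hsupp) orbT.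
by rewrite cZ ltnn.
Qed.
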